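(* Let $I$ DMUs have nonnegative, nonzero nominal output data $Y\in\mathbb{R}^{M\times I}$ and input data $X\in\mathbb{R}^{N\times I}$ and suppose the maximum allowed amount of box uncertainty is $\nu=\infty$. Then no DMU is incapable; that is, for every DMU $\hat\imath$ there exist $\sigma\ge0$ and perturbations $\Delta,\nabla$ with all entries in $[-\sigma,\sigma]$ and $Y+\Delta\ge0$, $X+\nabla\ge0$ such that the efficiency score of DMU $\hat\imath$ computed from the data $(Y+\Delta,X+\nabla)$ equals $1$.
   Context: Input-oriented BCC DEA: the efficiency score of DMU $k$ with data $(X,Y)$ is $\min\{\theta: Y\lambda\ge y^k,\ X\lambda\le\theta x^k,\ e^T\lambda=1,\ \lambda\ge0\}$, $e$ the all-ones vector. A DMU is capable under box uncertainty with bound $\nu$ if, for some amount $\sigma\in[0,\nu]$, some realisation of the data within the box of size $\sigma$ (every entry within $\sigma$ of its nominal value, data kept nonnegative) makes its efficiency score equal to $1$; it is incapable otherwise. *)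

(* Defs.v *)
From HB Require Import structures.
From mathcomp Require Import all_boot all_order all_algebra.
Set Implicit Arguments. Unset Strict Implicit. Unset Printing Implicit Defensive.
Import Order.TTheory GRing.Theory Num.Theory.
Local Open Scope ring_scope.

Definition bcc_feasible (R : realFieldType) (M N I : nat)
    (Y : 'M[R]_(M, I)) (X : 'M[R]_(N, I)) (k : 'I_I) (theta : R) : Prop :=
  exists lam : 'cV[R]_I,
    (forall i, 0 <= lam i 0) /\
    (\sum_(i < I) lam i 0 = 1) /\
    (forall m, Y m k <= (Y *m lam) m 0) /\
    (forall n, (X *m lam) n 0 <= theta * X n k).

(* "the efficiency score (a minimum) equals s": s is feasible and is a
   lower bound of all feasible theta. *)
Definition bcc_score_is (R : realFieldType) (M N I : nat)
    (Y : 'M[R]_(M, I)) (X : 'M[R]_(N, I)) (k : 'I_I) (s : R) : Prop :=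
  bcc_feasible Y X k s /\ (forall t, bcc_feasible Y X k t -> s <= t).

(* Main.v *)
Require Import Defs.
From HB Require Import structures.
From mathcomp Require Import all_boot all_order all_algebra.
Import Order.TTheory GRing.Theory Num.Theory.
Local Open Scope ring_scope.

Theorem theorem2 (R : realFieldType) (M N I : nat)
    (Y : 'M[R]_(M, I)) (X : 'M[R]_(N, I))
    (hY0 : forall m i, 0 <= Y m i) (hX0 : forall n i, 0 <= X n i)
    (hYnz : Y != 0) (hXnz : X != 0) :
  forall k : 'I_I,
    exists sigma : R, 0 <= sigma /\
    exists (Dl : 'M[R]_(M, I)) (Nb : 'M[R]_(N, I)),
      (forall m i, `|Dl m i| <= sigma) /\
      (forall n i, `|Nb n i| <= sigma) /\
      (forall m i, 0 <= (Y + Dl) m i) /\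
      (forall n i, 0 <= (X + Nb) n i) /\
      bcc_score_is (Y + Dl) (X + Nb) k 1.
Proof.
move=> k.
have hS : forall n i, X n i <= \sum_(n' < N) \sum_(i' < I) X n' i'.
  move=> n i.
  rewrite (bigD1 n) //= (bigD1 i) //= -addrA lerDl.
  apply: addr_ge0; apply: sumr_ge0 => *; [done|].
  by apply: sumr_ge0 => *.
have hS0 : 0 <= \sum_(n' < N) \sum_(i' < I) X n' i'.
  by apply: sumr_ge0 => *; apply: sumr_ge0 => *.
exists (1 + \sum_(n' < N) \sum_(i' < I) X n' i'); split.
  by apply: addr_ge0.
exists 0, (const_mx 1 - X).
have hXN : X + (const_mx 1 - X) = const_mx 1 by rewrite addrC subrK.
rewrite addr0 hXN.
split; first by move=> m i; rewrite mxE normr0; apply: addr_ge0.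
split.
  move=> n i; rewrite !mxE.
  apply: (le_trans (ler_normB _ _)); rewrite normr1 ger0_norm //.
  by rewrite lerD2l.
split; first by [].
split; first by move=> n i; rewrite mxE.
have hsum : forall lam : 'cV[R]_I, forall n : 'I_N, ((const_mx 1 : 'M[R]_(N, I)) *m lam) n 0 = \sum_i lam i 0.
  by move=> lam n; rewrite mxE; apply: eq_bigr => i _; rewrite mxE mul1r.
split.
  exists (delta_mx k 0); split.
    by move=> i; rewrite /delta_mx mxE; case: (_ && _).
  split.
    rewrite (bigD1 k) //= big1 ?addr0; first by rewrite mxE !eqxx.
    by move=> i /negPf hi; rewrite mxE hi.
  split.
    by move=> m; rewrite -colE mxE.
  move=> n; rewrite hsum mxE mul1r (bigD1 k) //= big1 ?addr0; first by rewrite mxE !eqxx.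
  by move=> i /negPf hi; rewrite mxE hi.
move=> t [lam [_ [h1 [_ h2]]]].
destruct N as [|N'].
  by exfalso; move/eqP: hXnz; apply; apply/matrixP => [[]].
by move: (h2 ord0); rewrite hsum h1 mxE mulr1.
Qed.
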